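(* Let $(G,r)$ be a symmetric group, $r(a,b)=({}^ab,a^b)$, which is not the trivial solution, and let $(G,+,\cdot)$ be its associated left brace. The following are equivalent: (1) $(G,r)$ is a multipermutation solution of level $2$; (2) $G$ acts upon itself from the left as automorphisms: ${}^a(bc)=({}^ab)({}^ac)$ for all $a,b,c\in G$; (3) at least one (equivalently, each) of the following identities holds for all $a,b\in G$: (i) $\mathcal{L}_{{}^ba}=\mathcal{L}_a$; (ii) $\mathcal{L}_{a^b}=\mathcal{L}_a$; (iii) $\mathcal{R}_{{}^ba}=\mathcal{R}_a$; (iv) $\mathcal{R}_{a^b}=\mathcal{R}_a$. Moreover, each of these conditions implies that $(G,r)$ satisfies lri and the cyclic conditions, and that the brace satisfies Raut.
   Context: A symmetric group is $(G,r)$, $G$ a group, $r(u,v)=({}^uv,u^v)$ an involutive bijection of $G\times G$ with ${}^a1=1,{}^1u=u,1^u=1,a^1=a$, ${}^{ab}u={}^a({}^bu)$, $a^{uv}=(a^u)^v$, ${}^a(uv)=({}^au)({}^{a^u}v)$, $(ab)^u=(a^{{}^bu})(b^u)$, $uv=({}^uv)(u^v)$; it is a non-degenerate involutive set-theoretic solution of the Yang–Baxter equation. $\mathcal{L}_a(b)={}^ab$, $\mathcal{R}_a(b)=b^a$. The trivial solution means $r(a,b)=(b,a)$. The associated left brace has $a+b:=a({}^{a^{-1}}b)$. lri: $({}^ab)^a=b={}^a(b^a)$ for all $a,b$. Cyclic conditions: ${}^{(b^a)}a={}^ba$, $a^{({}^ab)}=a^b$, ${}^{({}^ab)}a={}^ba$,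 $a^{(b^a)}=a^b$ for all $a,b$. Raut: $(a+b)^c=a^c+b^c$. Retraction: classes of $a\sim b$ iff $\mathcal{L}_a=\mathcal{L}_b$ with induced map; $\mathrm{mpl}=m$ iff $m$ is minimal such that the $m$-fold iterated retraction has one element. *)

(* Defs.v *)
(* an abstract (possibly infinite) group given by its carrier
   and operations, with the symmetric-group structure given by the two actions
   lact a b = ^a b   and   ract a b = a^b,   so that r(a,b) = (lact a b, ract a b). *)

Set Implicit Arguments.

Record IsSymGroup (G : Type) (mul : G -> G -> G) (one : G) (inv : G -> G)
    (lact ract : G -> G -> G) : Prop := {
  sg_assoc : forall a b c, mul (mul a b) c = mul a (mul b c);
  sg_mul1l : forall a, mul one a = a;
  sg_mul1r : forall a, mul a one = a;
  sg_mulVl : forall a, mul (inv a) a = one;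
  sg_mulVr : forall a, mul a (inv a) = one;
  sg_invol : forall a b,
      lact (lact a b) (ract a b) = a /\ ract (lact a b) (ract a b) = b;
  sg_lact_a1 : forall a, lact a one = one;
  sg_lact_1u : forall u, lact one u = u;
  sg_ract_1u : forall u, ract one u = one;
  sg_ract_a1 : forall a, ract a one = a;
  sg_lact_mul : forall a b u, lact (mul a b) u = lact a (lact b u);
  sg_ract_mul : forall a u v, ract a (mul u v) = ract (ract a u) v;
  sg_ML1 : forall a u v, lact a (mul u v) = mul (lact a u) (lact (ract a u) v);
  sg_MR1 : forall a b u, ract (mul a b) u = mul (ract a (lact b u)) (ract b u);
  sg_M3 : forall u v, mul u v = mul (lact u v) (ract u v)
}.

Definition trivial_solution (G : Type) (lact ract : G -> G -> G) : Prop :=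
  forall a b, lact a b = b /\ ract a b = a.

(* Iterated retraction, described by the equivalence relation on G whose
   classes are the elements of the k-fold retraction:
   retEq 0 = equality; two elements are identified at level k+1 iff their
   induced left actions on the k-fold retraction coincide, i.e.
   forall z, [^x z]_k = [^y z]_k. *)
Fixpoint retEq (G : Type) (lact : G -> G -> G) (k : nat) : G -> G -> Prop :=
  match k with
  | O => fun x y => x = y
  | S k' => fun x y => forall z, retEq lact k' (lact x z) (lact y z)
  end.

Definition ret_one_elem (G : Type) (lact : G -> G -> G) (k : nat) : Prop :=
  forall x y, retEq lact k x y.

Definition mpl (G : Type) (lact : G -> G -> G) (m : nat) : Prop :=
  ret_one_elem lact m /\ (forall k, k < m -> ~ ret_one_elem lact k).

Definition brace_add (G : Type) (mul : G -> G -> G) (inv : G -> G)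
    (lact : G -> G -> G) (a b : G) : G :=
  mul a (lact (inv a) b).

Definition lri (G : Type) (lact ract : G -> G -> G) : Prop :=
  forall a b, ract (lact a b) a = b /\ lact a (ract b a) = b.

Definition cyclic_conditions (G : Type) (lact ract : G -> G -> G) : Prop :=
  forall a b,
    lact (ract b a) a = lact b a /\
    ract a (lact a b) = ract a b /\
    lact (lact a b) a = lact b a /\
    ract a (ract b a) = ract a b.

Definition Raut (G : Type) (mul : G -> G -> G) (inv : G -> G)
    (lact ract : G -> G -> G) : Prop :=
  forall a b c,
    ract (brace_add mul inv lact a b) c =
    brace_add mul inv lact (ract a c) (ract b c).

(* Main.v *)
Require Import Defs.
From Stdlib Require Import FunctionalExtensionality Setoid.

Theorem mainTheorem14 (G : Type) (mul : G -> G -> G) (one : G) (inv : G -> G)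
    (lact ract : G -> G -> G)
    (HG : IsSymGroup mul one inv lact ract)
    (Hnontriv : ~ trivial_solution lact ract) :
  let L := fun a : G => lact a in
  let R := fun a : G => (fun b : G => ract b a) in
  let cond2 := forall a b c, lact a (mul b c) = mul (lact a b) (lact a c) in
  ((mpl lact 2 <-> cond2) /\
   (cond2 <-> (forall a b, L (lact b a) = L a)) /\
   (cond2 <-> (forall a b, L (ract a b) = L a)) /\
   (cond2 <-> (forall a b, R (lact b a) = R a)) /\
   (cond2 <-> (forall a b, R (ract a b) = R a))) /\
  (cond2 -> lri lact ract /\ cyclic_conditions lact ract /\ Raut mul inv lact ract).
Proof.
  cbv zeta.
  destruct HG as [assoc m1l m1r mVl mVr invol la1 l1u r1u ra1 lmul rmul ML1 MR1 M3].
  assert (Linv1 : forall z x, lact (inv z) (lact z x) = x).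
  { intros z x. rewrite <- lmul, mVl. apply l1u. }
  assert (Linv2 : forall z x, lact z (lact (inv z) x) = x).
  { intros z x. rewrite <- lmul, mVr. apply l1u. }
  assert (Rinv1 : forall z x, ract (ract x z) (inv z) = x).
  { intros z x. rewrite <- rmul, mVr. apply ra1. }
  assert (Rinv2 : forall z x, ract (ract x (inv z)) z = x).
  { intros z x. rewrite <- rmul, mVl. apply ra1. }
  assert (cancel : forall x y z, mul x y = mul x z -> y = z).
  { intros x y z H. rewrite <- (m1l y), <- (m1l z), <- (mVl x), !assoc, H. reflexivity. }
  assert (Linvc : forall x y, (forall w, lact x w = lact y w) -> forall c, lact (inv x) c = lact (inv y) c).
  { intros x y H c. rewrite <- (Linv1 y (lact (inv x) c)), <- H, Linv2. reflexivity. }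
  assert (Rinvc : forall x y, (forall w, ract w x = ract w y) -> forall c, ract c (inv x) = ract c (inv y)).
  { intros x y H c. rewrite <- (Rinv1 y (ract c (inv x))), <- H, Rinv2. reflexivity. }
  set (Ip := forall a b c, lact (lact b a) c = lact a c).
  set (IIp := forall a b c, lact (ract a b) c = lact a c).
  set (IIIp := forall a b c, ract c (lact b a) = ract c a).
  set (IVp := forall a b c, ract c (ract a b) = ract c a).
  set (cond2 := forall a b c, lact a (mul b c) = mul (lact a b) (lact a c)).
  assert (key1 : Ip -> forall x y, ract x y = lact (inv y) x).
  { intros HI x y. destruct (invol x y) as [H1 _].
    rewrite HI in H1. transitivity (lact (inv y) (lact y (ract x y))); [symmetry; apply Linv1|rewrite H1; reflexivity]. }
  assert (key2 : IVp -> forall x y, lact x y = ract y (inv x)).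
  { intros HI x y. destruct (invol x y) as [_ H1].
    rewrite HI in H1. transitivity (ract (ract (lact x y) x) (inv x)); [symmetry; apply Rinv1|rewrite H1; reflexivity]. }
  assert (c2_II : cond2 <-> IIp).
  { split.
    - intros H a b c. apply (cancel (lact a b)). rewrite <- ML1, H. reflexivity.
    - intros H a b c. rewrite ML1, H. reflexivity. }
  assert (I_II : Ip <-> IIp).
  { split.
    - intros H a b c. destruct (invol a b) as [H1 _].
      rewrite <- (H (ract a b) (lact a b) c), H1. reflexivity.
    - intros H a b c. destruct (invol b a) as [_ H1].
      rewrite <- (H (lact b a) (ract b a) c), H1. reflexivity. }
  assert (III_IV : IIIp <-> IVp).
  { split.
    - intros H a b c. destruct (invol a b) as [H1 _].
      rewrite <- (H (ract a b) (lact a b) c), H1. reflexivity.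
    - intros H a b c. destruct (invol b a) as [_ H1].
      rewrite <- (H (lact b a) (ract b a) c), H1. reflexivity. }
  assert (I_III : Ip <-> IIIp).
  { split.
    - intros H a b c. rewrite (key1 H c (lact b a)), (key1 H c a). apply Linvc. intro w. apply H.
    - intros H a b c. assert (H4 : IVp) by (apply III_IV; exact H).
      rewrite (key2 H4 (lact b a) c), (key2 H4 a c). apply Rinvc. intro w. apply H. }
  assert (fI : Ip <-> (forall a b, lact (lact b a) = lact a)).
  { split; intros H a b; [apply functional_extensionality; intro c; apply H|].
    intro c. rewrite H. reflexivity. }
  assert (fII : IIp <-> (forall a b, lact (ract a b) = lact a)).
  { split; intros H a b; [apply functional_extensionality; intro c; apply H|].
    intro c. rewrite H. reflexivity. }
  assert (fIII : IIIp <-> (forall a b, (fun c => ract c (lact b a)) = (fun c => ract c a))).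
  { split; intros H a b; [apply functional_extensionality; intro c; apply H|].
    intro c. exact (f_equal (fun f => f c) (H a b)). }
  assert (fIV : IVp <-> (forall a b, (fun c => ract c (ract a b)) = (fun c => ract c a))).
  { split; intros H a b; [apply functional_extensionality; intro c; apply H|].
    intro c. exact (f_equal (fun f => f c) (H a b)). }
  assert (c2I : cond2 <-> Ip) by (rewrite c2_II, I_II; tauto).
  split; [split; [|split; [|split; [|split]]]|].
  - split.
    + intros [H _]. apply c2I. intros a b c.
      pose proof (H b one a c) as E. simpl in E. rewrite l1u in E. exact E.
    + intros H. apply c2I in H. split.
      * intros x y z w. simpl. rewrite !H. reflexivity.
      * intros k Hk Hret. apply Hnontriv.
        destruct k as [|[|k]].
        -- intros a b. split; apply Hret.
        -- assert (Hid : forall x z, lact x z = z).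
           { intros x z. rewrite (Hret x one z). apply l1u. }
           assert (HI : Ip) by (intros a b c; rewrite !Hid; reflexivity).
           intros a b. split; [apply Hid|]. rewrite (key1 HI), Hid. reflexivity.
        -- exfalso. inversion Hk as [|m Hm]; inversion Hm as [|m2 Hm2]; inversion Hm2.
  - rewrite c2I. exact fI.
  - rewrite c2_II. exact fII.
  - rewrite c2I, I_III. exact fIII.
  - rewrite c2I, I_III, III_IV. exact fIV.
  - intros H.
    assert (HI : Ip) by (apply c2I; exact H).
    assert (HII : IIp) by (apply I_II; exact HI).
    assert (HIII : IIIp) by (apply I_III; exact HI).
    assert (HIV : IVp) by (apply III_IV; exact HIII).
    split; [|split].
    + intros a b. split.
      * rewrite (key1 HI), Linv1. reflexivity.
      * rewrite (key1 HI), Linv2. reflexivity.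
    + intros a b. split; [apply HII|split; [apply HIII|split; [apply HI|apply HIV]]].
    + assert (comm : forall u v x, lact u (lact v x) = lact v (lact u x)).
      { intros u v x. rewrite <- lmul, M3, lmul, HI, HII. reflexivity. }
      intros a b c. unfold brace_add.
      rewrite MR1, HIII. f_equal.
      rewrite !(key1 HI).
      rewrite (Linvc (lact (inv c) a) a (fun w => HI a (inv c) w)).
      apply comm.
Qed.
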